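(* Let $X+_fW$, $Y$ and $Z$ be Hausdorff topological spaces, let $\pi:Y\to X$ and $\varpi:Z\to W$ be continuous maps with $\varpi$ injective, and let $f^\ast:\mathrm{Closed}(Y)\to\mathrm{Closed}(Z)$ be $f^\ast(A)=\mathrm{Cl}_Z\big(\varpi^{-1}(f(\mathrm{Cl}_X(\pi(A))))\big)$. Then $Y+_{f^\ast}Z$ is Hausdorff.
   Context: $\mathrm{Closed}(A)$ is the set of closed subsets of a space $A$; $f:\mathrm{Closed}(X)\to\mathrm{Closed}(W)$ is admissible if $f(\emptyset)=\emptyset$ and $f$ preserves finite unions ($f^\ast$ is then admissible as well); $X+_fW$ is $X\sqcup W$ with closed sets the $D$ such that $D\cap X$ is closed in $X$, $D\cap W$ closed in $W$ and $f(D\cap X)\subseteq D$. *)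

(* Defs.v *)
From mathcomp Require Import all_boot all_classical all_reals topology.
Set Implicit Arguments. Unset Strict Implicit. Unset Printing Implicit Defensive.
Local Open Scope classical_set_scope.

(* Closed(A) is modeled by the predicate [closed] on [set A]; a map
   Closed(X) -> Closed(W) is a function on sets required to send closed
   sets to closed sets. *)

Definition admissible (X W : topologicalType) (f : set X -> set W) : Prop :=
  [/\ (forall A, closed A -> closed (f A)),
      f set0 = set0 &
      (forall A B, closed A -> closed B -> f (A `|` B) = f A `|` f B)].

(* Closed sets of X +_f W, a topology on the disjoint union (X + W)%type. *)
Definition sum_closed (X W : topologicalType) (f : set X -> set W)
    (D : set (X + W)%type) : Prop :=
  [/\ closed [set x | D (inl x)],
      closed [set w | D (inr w)] &
      (forall w, f [set x | D (inl x)] w -> D (inr w))].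

Definition sum_open (X W : topologicalType) (f : set X -> set W)
    (U : set (X + W)%type) : Prop := sum_closed f (~` U).

Definition sum_hausdorff (X W : topologicalType) (f : set X -> set W) : Prop :=
  forall p q : (X + W)%type, p <> q ->
    exists U V : set (X + W)%type,
      [/\ sum_open f U, sum_open f V, U p, V q & U `&` V = set0].

Definition fstar (X W Y Z : topologicalType) (f : set X -> set W)
    (pi : Y -> X) (varpi : Z -> W) (A : set Y) : set Z :=
  closure (varpi @^-1` (f (closure (pi @` A)))).

(* Main.v *)
Require Import Defs.
From mathcomp Require Import all_boot all_classical all_reals topology.
Local Open Scope classical_set_scope.

Lemma closed_pre {T U : topologicalType} {g : T -> U} {C : set U} :
  continuous g -> closed C -> closed (g @^-1` C).
Proof.
move=> gc cC.
have -> : g @^-1` C = ~` (g @^-1` (~` C)).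
  by rewrite funeqE => x /=; rewrite propeqE; split => [h /(_ h)|/contrapT].
rewrite closedC; apply: open_comp; first by move=> x _; exact: gc.
by rewrite openC.
Qed.

Definition pb {X W Y Z : Type} (pi : Y -> X) (varpi : Z -> W)
  (U : set (X + W)%type) : set (Y + Z)%type :=
  fun p => match p with inl y => U (inl (pi y)) | inr z => U (inr (varpi z)) end.

Lemma pb_open (X W Y Z : topologicalType) (f : set X -> set W)
    (pi : Y -> X) (varpi : Z -> W) U :
  admissible f -> continuous pi -> continuous varpi ->
  sum_open f U -> sum_open (fstar f pi varpi) (pb pi varpi U).
Proof.
move=> [fc f0 fU] pic vc [cX cW fXW]; split.
- exact (closed_pre pic cX).
- exact (closed_pre vc cW).
set A := [set y | _].
set CX := [set x | (~` U) (inl x)] in cX fXW *.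
set CW := [set w | (~` U) (inr w)] in cW fXW *.
have sA : closure (pi @` A) `<=` CX.
  rewrite [X in _ `<=` X]((closure_id CX).1 cX); apply: closureS => _ [y Ay <-]; exact: Ay.
have cK : closed (closure (pi @` A)) by exact: closed_closure.
have fK : f (closure (pi @` A)) `<=` f CX.
  have -> : CX = closure (pi @` A) `|` CX.
    by rewrite funeqE => x; rewrite propeqE; split; [right|case=> //; apply: sA].
  rewrite fU // => w; by left.
move=> z hz.
have cB : closed (varpi @^-1` CW) by exact: (closed_pre vc cW).
have : closure (varpi @^-1` f (closure (pi @` A))) `<=` varpi @^-1` CW.
  rewrite [X in _ `<=` X]((closure_id _).1 cB); apply: closureS => z' /fK; exact: fXW.
by move/(_ z hz).
Qed.
Lemma pb_disj {X W Y Z : Type} (pi : Y -> X) (varpi : Z -> W) (U V : set (X + W)%type) :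
  U `&` V = set0 -> pb pi varpi U `&` pb pi varpi V = set0.
Proof.
move=> UV; rewrite -subset0 => -[y|z] [a b].
  by have : (U `&` V) (inl (pi y)) by []; rewrite UV.
by have : (U `&` V) (inr (varpi z)) by []; rewrite UV.
Qed.

Definition inlset {Y Z : Type} (U : set Y) : set (Y + Z)%type :=
  fun p => match p with inl y => U y | inr _ => False end.

Lemma inl_open (Y Z : topologicalType) (g : set Y -> set Z) (U : set Y) :
  open U -> sum_open g (inlset U).
Proof.
move=> oU; split.
- by rewrite -[X in closed X]/(~` U) closedC.
- have -> : [set w | (~` inlset U) (@inr Y Z w)] = setT.
    by rewrite funeqE => w; rewrite propeqE; split => // _ [].
  exact: closedT.
- by move=> w _ [].
Qed.

Theorem mainTheorem19 (X W Y Z : topologicalType) (f : set X -> set W)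
    (pi : Y -> X) (varpi : Z -> W) :
  admissible f ->
  sum_hausdorff f ->
  hausdorff_space Y -> hausdorff_space Z ->
  continuous pi -> continuous varpi -> injective varpi ->
  sum_hausdorff (fstar f pi varpi).
Proof.
move=> adm H hY hZ pic vc vinj.
move=> [y1|z1] [y2|z2] neq.
- rewrite open_hausdorff in hY.
  have [[A B] /= [a b] [oA oB AB]] : exists2 AB : set Y * set Y,
      (y1 \in AB.1 /\ y2 \in AB.2) &
      [/\ open AB.1, open AB.2 & AB.1 `&` AB.2 == set0].
    by apply: hY; apply/eqP => e; apply: neq; rewrite e.
  exists (inlset A), (inlset B); split.
  + exact: inl_open.
  + exact: inl_open.
  + by move: a; rewrite in_setE.
  + by move: b; rewrite in_setE.
  + move/eqP: AB => AB; rewrite -subset0 => -[y|z] [u v] //.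
    by have : (A `&` B) y by []; rewrite AB.
- have ne : inl (pi y1) <> inr (varpi z2) :> (X + W)%type by [].
  have [U [V [oU oV Ui Vi UV]]] := H _ _ ne.
  exists (pb pi varpi U), (pb pi varpi V); split => //;
    [exact: pb_open|exact: pb_open|exact: pb_disj].
- have ne : inr (varpi z1) <> inl (pi y2) :> (X + W)%type by [].
  have [U [V [oU oV Ui Vi UV]]] := H _ _ ne.
  exists (pb pi varpi U), (pb pi varpi V); split => //;
    [exact: pb_open|exact: pb_open|exact: pb_disj].
- have ne : inr (varpi z1) <> inr (varpi z2) :> (X + W)%type.
    by move=> [] /vinj e; apply: neq; rewrite e.
  have [U [V [oU oV Ui Vi UV]]] := H _ _ ne.
  exists (pb pi varpi U), (pb pi varpi V); split => //;
    [exact: pb_open|exact: pb_open|exact: pb_disj].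
Qed.
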